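(* Bob can win the $2$-Expanded Coloring Game on an uncolored path $P_5$ on five vertices.
   Context: A color is legal for an uncolored vertex $v$ if no neighbor of $v$ has that color. The $k$-coloring game on a (partially colored) graph: Alice and Bob alternate turns, Alice first, each coloring an uncolored vertex with a legal color from a set of $k$ colors; Bob wins if at some point an uncolored vertex has no legal color, Alice wins if all vertices become colored. The $k$-Expanded Coloring Game ($k$-ECG) on a partially colored forest is the same as the $k$-coloring game except that on her turn Alice may choose not to color a vertex, and if she does not color a vertex she may instead add to the forest a single new colored leaf (a new vertex joined to exactly one existing vertex, colored with one of the $k$ colors). *)

(* Defs.v *)
From mathcomp Require Import all_boot.
Set Implicit Arguments. Unset Strict Implicit. Unset Printing Implicit Defensive.

(* A partially colored graph: vertices are 0 .. nv-1, an undirected edge list,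
   and a partial coloring (None = uncolored; colors are naturals < k). *)
Record pgraph := PGraph {
  nv : nat;
  edges : seq (nat * nat);
  col : nat -> option nat
}.

Definition adj (G : pgraph) (x y : nat) : bool :=
  ((x, y) \in edges G) || ((y, x) \in edges G).

Definition legal (k : nat) (G : pgraph) (v c : nat) : Prop :=
  c < k /\ forall u, u < nv G -> adj G u v -> col G u <> Some c.

Definition stuck (k : nat) (G : pgraph) : Prop :=
  exists v, [/\ v < nv G, col G v = None & forall c, ~ legal k G v c].

Definition all_colored (G : pgraph) : Prop :=
  forall v, v < nv G -> col G v <> None.

Definition recolor (G : pgraph) (v c : nat) : pgraph :=
  PGraph (nv G) (edges G) (fun x => if x == v then Some c else col G x).

Definition color_move (k : nat) (G G' : pgraph) : Prop :=
  exists v c, [/\ v < nv G, col G v = None, legal k G v c & G' = recolor G v c].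

Definition add_leaf_move (k : nat) (G G' : pgraph) : Prop :=
  exists u c, [/\ u < nv G, c < k, col G u <> Some c &
    G' = PGraph (nv G).+1 ((nv G, u) :: edges G)
                (fun x => if x == nv G then Some c else col G x)].

Definition alice_move (k : nat) (G G' : pgraph) : Prop :=
  [\/ color_move k G G', add_leaf_move k G G' | G' = G].

(* Bob has a winning strategy from G, with Alice (resp. Bob) to move. *)
Inductive bob_wins_A (k : nat) : pgraph -> Prop :=
| BA_stuck G : stuck k G -> bob_wins_A k G
| BA_move G : ~ all_colored G ->
    (forall G', alice_move k G G' -> bob_wins_B k G') -> bob_wins_A k G
with bob_wins_B (k : nat) : pgraph -> Prop :=
| BB_stuck G : stuck k G -> bob_wins_B k G
| BB_move G G' : ~ all_colored G -> color_move k G G' -> bob_wins_A k G' ->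
    bob_wins_B k G.

Definition uncolored_path (n : nat) : pgraph :=
  PGraph n [seq (i, i.+1) | i <- iota 0 n.-1] (fun _ => None).

(* Main.v *)
Require Import Defs.
From mathcomp Require Import all_boot.
Set Implicit Arguments. Unset Strict Implicit. Unset Printing Implicit Defensive.
Definition ast := (seq (option nat) * seq (seq bool))%type.
Definition acl (s : ast) i := nth None s.1 i.
Definition lm (s : ast) i c := nth false (nth [::] s.2 i) c.
Definition padj (i j : nat) := (j == i.+1) || (i == j.+1).
Definition aforb s i c := lm s i c || has (fun j => padj j i && (acl s j == Some c)) (iota 0 5).
Definition astuck s := has (fun i => (acl s i == None) && aforb s i 0 && aforb s i 1) (iota 0 5).
Definition aall s := all (fun i => acl s i != None) (iota 0 5).
Definition acolor (s : ast) i c : ast := (set_nth None s.1 i (Some c), s.2).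
Definition aleaf (s : ast) i c : ast := (s.1, set_nth [::] s.2 i (set_nth false (nth [::] s.2 i) c true)).
Definition cmv s := flatten [seq [seq acolor s i c | c <- iota 0 2 & (acl s i == None) && ~~ aforb s i c] | i <- iota 0 5].
Definition lmv s := flatten [seq [seq aleaf s i c | c <- iota 0 2] | i <- iota 0 5].
Fixpoint winA n s := astuck s || (if n is n'.+1 then ~~ aall s && all (fun t => astuck t || has (winA n') (cmv t)) (s :: cmv s ++ lmv s) else false).
Definition s0 : ast := (nseq 5 None, nseq 5 [::]).
Lemma win0 : winA 2 s0. Proof. by vm_compute. Qed.

Record rel (G : pgraph) (s : ast) : Prop := Rel {
  r1 : 5 <= nv G;
  r2 : forall x, x < 5 -> col G x = acl s x;
  r3 : forall x, 5 <= x -> x < nv G -> col G x <> None;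
  r4 : forall a b, adj G a b -> a < nv G /\ b < nv G;
  r5 : forall i j, i < 5 -> j < 5 -> adj G i j = padj i j;
  r6 : forall i d, i < 5 -> d < 2 ->
     (lm s i d <-> exists w, [/\ 5 <= w, w < nv G, adj G w i & col G w = Some d]) }.

Lemma forb_iff G s i c : rel G s -> i < 5 -> c < 2 ->
  ((exists u, [/\ u < nv G, adj G u i & col G u = Some c]) <-> aforb s i c).
Proof.
move=> R hi hc; split.
- move=> [u [hu ha hcol]]; rewrite /aforb.
  case: (ltnP u 5) => hu5.
  + apply/orP; right; apply/hasP; exists u; first by rewrite mem_iota.
    by rewrite -(r5 R) // ha /= -(r2 R) // hcol.
  + apply/orP; left; apply/(r6 R) => //; by exists u.
- case/orP.
  + by move/(r6 R) => /(_ hi hc) [w [_ hw ha hcol]]; exists w.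
  + case/hasP=> j; rewrite mem_iota add0n => /andP[_ hj] /andP[hp /eqP he].
    exists j; split => //; first by apply: leq_trans hj (r1 R).
    by rewrite (r5 R). by rewrite (r2 R).
Qed.

Lemma legal_iff G s i c : rel G s -> i < 5 -> (legal 2 G i c <-> c < 2 /\ ~~ aforb s i c).
Proof.
move=> R hi; split.
- move=> [hc hl]; split => //; apply/negP => /(forb_iff R hi hc) [u [hu ha hcol]].
  exact: (hl u hu ha hcol).
- move=> [hc hf]; split => // u hu ha hcol; move/negP: hf; apply.
  by apply/(forb_iff R hi hc); exists u.
Qed.

Lemma stuck_of G s : rel G s -> astuck s -> stuck 2 G.
Proof.
move=> R /hasP [i]; rewrite mem_iota add0n => /andP[_ hi] /andP[/andP[/eqP hn f0] f1].
exists i; split; first by apply: leq_trans hi (r1 R).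
  by rewrite (r2 R).
move=> c /(@legal_iff G s i c R hi) [hc].
by case: c hc => [|[|]] //= _; rewrite ?f0 ?f1.
Qed.

Lemma notall G s : rel G s -> ~~ aall s -> ~ all_colored G.
Proof.
move=> R /allPn [i]; rewrite mem_iota add0n => /andP[_ hi]; rewrite negbK => /eqP hn hall.
by apply: (hall i); [apply: leq_trans hi (r1 R) | rewrite (r2 R)].
Qed.

Lemma acl_color s i c j : acl (acolor s i c) j = if j == i then Some c else acl s j.
Proof. by rewrite /acl /= nth_set_nth. Qed.

Lemma lm_leaf s i c j d : lm (aleaf s i c) j d = ((j == i) && (d == c)) || lm s j d.
Proof.
rewrite /lm /= nth_set_nth /=; case: eqP => [->|_] //=.
by rewrite nth_set_nth /=; case: eqP => [->|_] //=.
Qed.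

Lemma rel_color G s i c : rel G s -> i < 5 -> rel (recolor G i c) (acolor s i c).
Proof.
move=> R hi; constructor => /=.
- exact: (r1 R).
- by move=> x hx; rewrite acl_color (r2 R).
- move=> x hx hxn; have -> : (x == i) = false.
    by apply/negbTE; rewrite neq_ltn (leq_trans hi hx) orbT.
  exact: (r3 R).
- exact: (r4 R).
- exact: (r5 R).
- move=> j d hj hd; apply: iff_trans (r6 R hj hd) _; split => -[w [h1 h2 h3 h4]]; exists w; split => //.
  + have -> : (w == i) = false by apply/negbTE; rewrite neq_ltn (leq_trans hi h1) orbT.
    done.
  + move: h4; have -> : (w == i) = false by apply/negbTE; rewrite neq_ltn (leq_trans hi h1) orbT.
    done.
Qed.

Lemma color_inv G s G' : rel G s -> color_move 2 G G' ->
  exists i c, [/\ i < 5, c < 2, acl s i = None, ~~ aforb s i c & G' = recolor G i c].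
Proof.
move=> R [v [c [hv hn hl ->]]].
have hv5 : v < 5.
  by case: (ltnP v 5) => // h; case: (r3 R h hv hn).
have [hc hf] := (@legal_iff G s v c R hv5).1 hl.
by exists v, c; split => //; rewrite -(r2 R).
Qed.

Lemma bob_move G s i c : rel G s -> i < 5 -> c < 2 -> acl s i = None -> ~~ aforb s i c ->
  color_move 2 G (recolor G i c).
Proof.
move=> R hi hc hn hf; exists i, c; split => //.
- exact: leq_trans hi (r1 R).
- by rewrite (r2 R).
- by apply/(@legal_iff G s i c R hi).
Qed.

Lemma cmv_iff s t : t \in cmv s <->
  exists i c, [/\ i < 5, c < 2, acl s i = None, ~~ aforb s i c & t = acolor s i c].
Proof.
split.
- case/flattenP => l /mapP [i]; rewrite mem_iota add0n => /andP[_ hi] ->.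
  case/mapP => c; rewrite mem_filter mem_iota add0n => /andP[/andP[/eqP hn hf] /andP[_ hc]] ->.
  by exists i, c.
- move=> [i [c [hi hc hn hf ->]]]; apply/flattenP.
  exists [seq acolor s i c0 | c0 <- iota 0 2 & (acl s i == None) && ~~ aforb s i c0].
    by apply/mapP; exists i => //; rewrite mem_iota.
  by apply/mapP; exists c => //; rewrite mem_filter mem_iota hn hf hc.
Qed.

Lemma adj_cons n p q E f a b :
  adj (PGraph n ((p, q) :: E) f) a b =
  ((a == p) && (b == q)) || ((b == p) && (a == q)) || adj (PGraph n E f) a b.
Proof.
rewrite /adj /= !in_cons !xpair_eqE.
by case: ((a, b) \in E); case: ((b, a) \in E); case: (a == p) (b == q) (b == p) (a == q) => [] [] [] []; rewrite ?orbT ?orbF.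
Qed.

Definition leafG (G : pgraph) u c :=
  PGraph (nv G).+1 ((nv G, u) :: edges G) (fun x => if x == nv G then Some c else col G x).

Lemma leaf_ex G s u c i d : rel G s -> u < nv G -> i < 5 ->
  (exists w, [/\ 5 <= w, w < nv (leafG G u c), adj (leafG G u c) w i & col (leafG G u c) w = Some d])
  <-> ((i == u) && (d == c)) \/ (exists w, [/\ 5 <= w, w < nv G, adj G w i & col G w = Some d]).
Proof.
move=> R hu hi.
have hin : (i == nv G) = false.
  by apply/negbTE; rewrite neq_ltn (leq_trans hi (r1 R)).
split.
- move=> [w [h1 h2]]; rewrite /leafG adj_cons /= hin /=.
  case: eqP => [->|hw].
  + move=> ha [<-]; left; rewrite eqxx andbT.
    case/orP: ha => ha; first by rewrite orbF in ha.
    have [] := r4 R ha; by rewrite ltnn.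
  + move=> ha hc; right; exists w; split => //.
    by rewrite ltnS in h2; rewrite ltn_neqAle h2 andbT; apply/eqP.
- case.
  + case/andP=> /eqP -> /eqP ->; exists (nv G); split => //.
    * exact: r1 R.
    * by rewrite /leafG adj_cons /= !eqxx.
    * by rewrite /= eqxx.
  + move=> [w [h1 h2 h3 h4]]; exists w; have hw : (w == nv G) = false.
      by apply/negbTE; rewrite neq_ltn h2.
    split => //=; first exact: ltnW.
    * by rewrite /leafG adj_cons /= hw hin.
    * by rewrite hw.
Qed.

Lemma rel_leaf G s u c : rel G s -> u < nv G ->
  rel (leafG G u c) (if u < 5 then aleaf s u c else s).
Proof.
move=> R hu.
have hacl : forall x, acl (if u < 5 then aleaf s u c else s) x = acl s x.
  by move=> x; case: ifP.
have hn x : x < 5 -> (x == nv G) = false.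
  by move=> hx; apply/negbTE; rewrite neq_ltn (leq_trans hx (r1 R)).
constructor.
- exact: leqW (r1 R).
- by move=> x hx; rewrite /= hn // hacl (r2 R).
- move=> x h1 h2 /=; case: eqP => // hx; apply: (r3 R h1).
  by rewrite ltnS in h2; rewrite ltn_neqAle h2 andbT; apply/eqP.
- move=> a b; rewrite /leafG adj_cons /= => /orP[/orP[|]|].
  + case/andP => /eqP -> /eqP ->; split; [exact: ltnSn | exact: ltnW].
  + case/andP => /eqP -> /eqP ->; split; [exact: ltnW | exact: ltnSn].
  + by move/(r4 R) => [h1 h2]; split; apply: ltnW.
- by move=> i j hi hj; rewrite /leafG adj_cons /= hn // hn //=; exact: (r5 R hi hj).
- move=> i d hi hd; apply: iff_sym; apply: iff_trans (leaf_ex c d R hu hi) _.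
  case: ifP => hu5.
  + rewrite lm_leaf; split.
    * case; first by move=> ->.
      by move/(r6 R hi hd) => ->; rewrite orbT.
    * case/orP; first by left.
      by move/(r6 R hi hd); right.
  + split.
    * case; last by move/(r6 R hi hd).
      case/andP => /eqP hiu; by rewrite -hiu hi in hu5.
    * by move/(r6 R hi hd); right.
Qed.
Lemma winA_S n s : winA n.+1 s = astuck s || (~~ aall s && all (fun t => astuck t || has (winA n) (cmv t)) (s :: cmv s ++ lmv s)).
Proof. by []. Qed.

Lemma sound n : forall G s, rel G s -> winA n s -> bob_wins_A 2 G.
Proof.
elim: n => [|n IH] G s R; last rewrite winA_S.
  by rewrite /= orbF => /(stuck_of R) H; apply: BA_stuck.
case/orP; first by move/(stuck_of R) => H; apply: BA_stuck.
case/andP => hna /allP hall; apply: BA_move; first exact: notall R hna.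
have step : forall G' t, rel G' t -> t \in s :: cmv s ++ lmv s -> bob_wins_B 2 G'.
  move=> G' t R' /hall /orP[/(stuck_of R') H|]; first exact: BB_stuck.
  case/hasP => t' /cmv_iff [i [c [hi hc hn hf ->]]] hw.
  apply: (@BB_move _ _ (recolor G' i c)).
  - apply: (notall R'); apply/allPn; exists i; first by rewrite mem_iota.
    by rewrite hn.
  - exact: bob_move R' hi hc hn hf.
  - exact: IH (rel_color c R' hi) hw.
move=> G' [H|H|->].
- have [i [c [hi hc hn hf ->]]] := color_inv R H.
  apply: (step _ _ (rel_color c R hi)).
  by rewrite in_cons mem_cat; apply/orP; right; apply/orP; left; apply/cmv_iff; exists i, c.
- move: H => [u [c [hu hc _ ->]]].
  apply: (step _ _ (rel_leaf c R hu)).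
  case: ifP => hu5; last by rewrite mem_head.
  rewrite in_cons mem_cat; apply/orP; right; apply/orP; right.
  apply/flattenP; exists [seq aleaf s u c0 | c0 <- iota 0 2].
    by apply/mapP; exists u => //; rewrite mem_iota.
  by apply/mapP; exists c => //; rewrite mem_iota.
- by apply: (step _ s R); rewrite mem_head.
Qed.

Lemma rel0 : rel (uncolored_path 5) s0.
Proof.
constructor => //=.
- by case=> [|[|[|[|[|x]]]]].
- by move=> x h1 h2; move: (leq_trans h1 h2); rewrite ltnn.
- move=> a b; rewrite /adj /= !inE !xpair_eqE.
  by case/orP => /or4P [] /andP [/eqP -> /eqP ->].
- move=> i j hi hj; case: i hi => [|[|[|[|[|i]]]]] // _; case: j hj => [|[|[|[|[|j]]]]] // _; by vm_compute.
- move=> i d hi _; have -> : lm s0 i d = false by case: i hi => [|[|[|[|[|i]]]]] // _; rewrite /lm /= nth_nil.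
  split => //; by move=> [w [h1 h2 _ _]]; move: (leq_trans h1 h2); rewrite ltnn.
Qed.

Theorem lemma4p1 : bob_wins_A 2 (uncolored_path 5).
Proof. exact: sound rel0 win0. Qed.
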